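(* Let $P,Q\in R[x][\partial]$. If $P$ and $Q$ are $R$-primitive, then so is $PQ$.
   Context: $R$ is a principal ideal domain; $\sigma$ is an $R$-automorphism of $R[x]$ with $\sigma(x)=\gamma x+\tau$ ($\gamma,\tau\in R$, $\gamma$ a unit), $\delta$ an $R$-linear $\sigma$-derivation of $R[x]$ with $\delta(x)$ of degree at most $1$; $R[x][\partial]$ is the Ore algebra with $\partial p=\sigma(p)\partial+\delta(p)$. Writing $L=a_kf_k\partial^k+\dots+a_0f_0$ with $a_i\in R$ and $f_i\in R[x]$ primitive (coefficients with gcd $1$), $L$ is $R$-primitive if $\gcd(a_0,\dots,a_k)=1$. *)

(* Defs.v *)
From HB Require Import structures.
From mathcomp Require Import all_boot all_order all_algebra.
Set Implicit Arguments. Unset Strict Implicit. Unset Printing Implicit Defensive.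
Import Order.TTheory GRing.Theory Num.Theory.
Local Open Scope ring_scope.

Definition dvdR (R : comPzRingType) (a b : R) : Prop := exists c : R, b = c * a.

Definition is_ideal (R : comPzRingType) (I : R -> Prop) : Prop :=
  [/\ I 0, (forall x y, I x -> I y -> I (x + y)) & (forall r x, I x -> I (r * x))].

Definition PID (R : idomainType) : Prop :=
  forall I : R -> Prop, is_ideal I -> exists g : R, forall x, I x <-> dvdR g x.

Definition coprime_family (R : comUnitRingType) (I : Type) (a : I -> R) : Prop :=
  forall d : R, (forall i, dvdR d (a i)) -> d \is a GRing.unit.

Definition primitive_poly (R : idomainType) (f : {poly R}) : Prop :=
  coprime_family (fun j : nat => f`_j).

Definition ore_sigma (R : idomainType) (gamma tau : R) (p : {poly R}) : {poly R} :=
  p \Po (gamma *: 'X + tau%:P).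

Definition ore_delta_ok (R : idomainType) (gamma tau : R)
    (delta : {poly R} -> {poly R}) : Prop :=
  [/\ (forall (c : R) (p q : {poly R}), delta (c *: p + q) = c *: delta p + delta q),
      (forall p q : {poly R},
          delta (p * q) = ore_sigma gamma tau p * delta q + delta p * q)
    & (size (delta 'X) <= 2)%N].

(* Elements of the Ore algebra R[x][d] are represented as polynomials in d
   with coefficients in R[x] written on the LEFT: L = \sum_i L`_i d^i,
   i.e. L : {poly {poly R}} with 'X playing the role of d.
   The additive structure is that of {poly {poly R}}; the product is ore_mul. *)

(* Left multiplication by d:  d * (\sum_j q_j d^j) = \sum_j (sigma(q_j) d^(j+1) + delta(q_j) d^j). *)
Definition ore_dmul (R : idomainType) (gamma tau : R) (delta : {poly R} -> {poly R})
    (Q : {poly {poly R}}) : {poly {poly R}} :=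
  \sum_(j < size Q)
     ((ore_sigma gamma tau Q`_j)%:P * 'X^(j.+1) + (delta Q`_j)%:P * 'X^j).

Definition ore_mul (R : idomainType) (gamma tau : R) (delta : {poly R} -> {poly R})
    (P Q : {poly {poly R}}) : {poly {poly R}} :=
  \sum_(i < size P) (P`_i)%:P * iter i (ore_dmul gamma tau delta) Q.

Definition R_primitive (R : idomainType) (L : {poly {poly R}}) : Prop :=
  exists (a : nat -> R) (f : nat -> {poly R}),
    [/\ forall i, L`_i = a i *: f i,
        forall i, primitive_poly (f i)
      & coprime_family (fun i : 'I_(size L) => a i)].

(* Main.v *)
Require Import Defs.
From HB Require Import structures.
From mathcomp Require Import all_boot all_order all_algebra.
From Stdlib Require Import Classical ClassicalEpsilon.
From mathcomp Require Import zify ring.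
Set Implicit Arguments. Unset Strict Implicit. Unset Printing Implicit Defensive.
Import GRing.Theory.
Local Open Scope ring_scope.

Section Gen.
Variable S : comNzRingType.
Variables sg dl : S -> S.
Hypothesis sg0 : sg 0 = 0.
Hypothesis dl0 : dl 0 = 0.
Hypothesis sgD : forall x y, sg (x + y) = sg x + sg y.
Hypothesis dlD : forall x y, dl (x + y) = dl x + dl y.

Definition gdmul (Q : {poly S}) : {poly S} :=
  \sum_(j < size Q) ((sg Q`_j)%:P * 'X^(j.+1) + (dl Q`_j)%:P * 'X^j).
Definition gmul (P Q : {poly S}) : {poly S} :=
  \sum_(i < size P) (P`_i)%:P * iter i gdmul Q.

Lemma gdmulE (Q : {poly S}) : gdmul Q = (\poly_(j < size Q) sg Q`_j) * 'X + \poly_(j < size Q) dl Q`_j.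
Proof.
rewrite /gdmul big_split /= !poly_def mulr_suml; congr (_ + _); apply: eq_bigr => j _; rewrite -!mul_polyC // exprSr mulrA //.
Qed.

Lemma coef_gdmul (Q : {poly S}) k : (gdmul Q)`_k = (if k is k'.+1 then sg Q`_k' else 0) + dl Q`_k.
Proof.
rewrite gdmulE coefD coefMX !coef_poly.
case: k => [|k] /=.
  by case: ltnP => [//|h]; rewrite (leq_sizeP _ _ h) // dl0.
case: (ltnP k.+1 (size Q)) => h1.
  by rewrite (ltn_trans (ltnSn k) h1).
rewrite (leq_sizeP _ _ h1 k.+1) // dl0.
by case: ltnP => h2; rewrite !addr0 // (leq_sizeP _ _ h2) // sg0.
Qed.

Lemma size_gdmul (Q : {poly S}) n : (size Q <= n)%N -> (size (gdmul Q) <= n.+1)%N.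
Proof.
move=> h; apply/leq_sizeP => j hj; rewrite coef_gdmul.
case: j hj => [//|j] hj.
by rewrite !(leq_sizeP _ _ h) ?sg0 ?dl0 ?addr0 // ltnW.
Qed.

Lemma top_gdmul (Q : {poly S}) n : (size Q <= n.+1)%N -> (gdmul Q)`_n.+1 = sg Q`_n.
Proof. by move=> h; rewrite coef_gdmul (leq_sizeP _ _ h n.+1) // dl0 addr0. Qed.

Lemma size_iter (Q : {poly S}) n i : (size Q <= n)%N -> (size (iter i gdmul Q) <= n + i)%N.
Proof.
move=> h; elim: i => [|i IH] /=; first by rewrite addn0.
by rewrite addnS; apply: size_gdmul.
Qed.

Lemma top_iter (Q : {poly S}) n i : (size Q <= n.+1)%N -> (iter i gdmul Q)`_(n + i) = iter i sg Q`_n.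
Proof.
move=> h; elim: i => [|i IH] /=; first by rewrite addn0.
rewrite addnS top_gdmul ?IH //.
by have := size_iter i h; rewrite addSn.
Qed.

Lemma gdmulD (Q1 Q2 : {poly S}) : gdmul (Q1 + Q2) = gdmul Q1 + gdmul Q2.
Proof.
apply/polyP => k; rewrite coefD !coef_gdmul !coefD dlD.
case: k => [|k] /=; first by rewrite !add0r.
by rewrite coefD sgD addrACA.
Qed.

Lemma iterD i (Q1 Q2 : {poly S}) : iter i gdmul (Q1 + Q2) = iter i gdmul Q1 + iter i gdmul Q2.
Proof. by elim: i => [|i IH] //=; rewrite IH gdmulD. Qed.

Lemma gmulE (P Q : {poly S}) N : (size P <= N)%N ->
  gmul P Q = \sum_(i < N) (P`_i)%:P * iter i gdmul Q.
Proof.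
move=> h; rewrite /gmul (big_ord_widen N (fun i => (P`_i)%:P * iter i gdmul Q) h).
rewrite [RHS](bigID (fun i : 'I_N => (i < size P)%N)) /= [X in _ = _ + X]big1 ?addr0 //.
by move=> i; rewrite -leqNgt => hi; rewrite (leq_sizeP _ _ hi) // polyC0 mul0r.
Qed.

Lemma gmulDl (A B Q : {poly S}) : gmul (A + B) Q = gmul A Q + gmul B Q.
Proof.
set N := maxn (size A) (size B).
have hA : (size A <= N)%N by rewrite leq_maxl.
have hB : (size B <= N)%N by rewrite leq_maxr.
have hAB : (size (A + B)%R <= N)%N by exact: size_polyD.
rewrite (gmulE _ hA) (gmulE _ hB) (gmulE _ hAB) -big_split /=.
by apply: eq_bigr => i _; rewrite coefD polyCD mulrDl.
Qed.

Lemma gmulDr (A C E : {poly S}) : gmul A (C + E) = gmul A C + gmul A E.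
Proof.
by rewrite /gmul -big_split /=; apply: eq_bigr => i _; rewrite iterD mulrDr.
Qed.

Lemma top_gmul (A C : {poly S}) m n : size A = m.+1 -> size C = n.+1 ->
  (gmul A C)`_(m + n) = A`_m * iter m sg C`_n.
Proof.
move=> hA hC; rewrite /gmul hA big_ord_recr /= coefD coef_sum big1.
  by rewrite add0r coefCM addnC top_iter ?hC.
move=> i _; have h := size_iter i (eq_leq hC).
rewrite coefCM (leq_sizeP _ _ h) ?mulr0 //.
have := ltn_ord i; lia.
Qed.

Variable D : S -> Prop.
Hypothesis D0 : D 0.
Hypothesis DD : forall x y, D x -> D y -> D (x + y).
Hypothesis DM : forall r x, D x -> D (r * x).
Hypothesis Dp : forall x y, D (x * y) -> D x \/ D y.
Hypothesis sgDp : forall x, D x -> D (sg x).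
Hypothesis sgDr : forall x, D (sg x) -> D x.
Hypothesis dlDp : forall x, D x -> D (dl x).

Definition Dpoly (P : {poly S}) := forall i, D P`_i.

Lemma DN x : D x -> D (- x).
Proof. by move=> h; rewrite -mulN1r; apply: DM. Qed.

Lemma DMr x r : D x -> D (x * r).
Proof. by move=> h; rewrite mulrC; apply: DM. Qed.

Lemma Dsum (I : Type) (r : seq I) (F : I -> S) : (forall i, D (F i)) -> D (\sum_(i <- r) F i).
Proof. by move=> h; apply: (big_ind D) => //. Qed.

Lemma Dpoly_gdmul Q : Dpoly Q -> Dpoly (gdmul Q).
Proof.
move=> h k; rewrite coef_gdmul; apply: DD; last by apply: dlDp.
by case: k => [|k] //; apply: sgDp.
Qed.

Lemma Dpoly_iter Q i : Dpoly Q -> Dpoly (iter i gdmul Q).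
Proof. by move=> h; elim: i => [|i IH] //=; apply: Dpoly_gdmul. Qed.

Lemma Dpoly_gmul_l B Q : Dpoly B -> Dpoly (gmul B Q).
Proof.
move=> h k; rewrite /gmul coef_sum; apply: Dsum => i; rewrite coefCM.
exact: DMr.
Qed.

Lemma Dpoly_gmul_r A E : Dpoly E -> Dpoly (gmul A E).
Proof.
move=> h k; rewrite /gmul coef_sum; apply: Dsum => i; rewrite coefCM.
by apply: DM; apply: Dpoly_iter.
Qed.

Lemma Diter_r m x : D (iter m sg x) -> D x.
Proof. by elim: m => [|m IH] //= h; apply: IH; apply: sgDr. Qed.

Lemma max_nonD (P : {poly S}) : ~ Dpoly P ->
  exists m, ~ D P`_m /\ forall i, (m < i)%N -> D P`_i.
Proof.
move=> nP.
suff: forall N, (forall i, (N <= i)%N -> D P`_i) ->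
   Dpoly P \/ exists m, ~ D P`_m /\ forall i, (m < i)%N -> D P`_i.
  case/(_ (size P)) => //.
  by move=> i hi; rewrite (leq_sizeP _ _ hi).
elim => [|N IH] h; first by left => i; apply: h.
case: (classic (D P`_N)) => hN.
  apply: IH => i; rewrite leq_eqVlt; case/orP => [/eqP <- //|]; exact: h.
by right; exists N; split.
Qed.

Lemma split_nonD (P : {poly S}) : ~ Dpoly P ->
  exists A B m, [/\ P = A + B, size A = m.+1, ~ D A`_m & Dpoly B].
Proof.
case/max_nonD => m [hm hgt].
have hA : size (\poly_(i < m.+1) P`_i) = m.+1.
  by apply: size_poly_eq => /=; apply/eqP => e; apply: hm; rewrite e.
exists (\poly_(i < m.+1) P`_i), (P - \poly_(i < m.+1) P`_i), m; split => //.
- by rewrite addrC subrK.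
- by rewrite coef_poly ltnSn.
move=> i; rewrite coefB coef_poly; case: ltnP => hi; first by rewrite subrr.
by rewrite subr0; apply: hgt.
Qed.

Lemma gauss_gmul P Q : Dpoly (gmul P Q) -> Dpoly P \/ Dpoly Q.
Proof.
move=> h; case: (classic (Dpoly P)) => hP; first by left.
case: (classic (Dpoly Q)) => hQ; first by right.
exfalso.
case: (split_nonD hP) => A [B] [m] [eP sA nA dB].
case: (split_nonD hQ) => C [E] [n] [eQ sC nC dE].
have := h (m + n)%N; rewrite eP eQ gmulDl gmulDr !coefD.
set x := (gmul A C)`_ _; set y := (gmul A E)`_ _; set z := (gmul B _)`_ _.
move=> hxyz.
have hx : D x.
  have -> : x = x + y + z - z - y by rewrite addrK addrK.
  apply: DD; last by apply: DN; apply: Dpoly_gmul_r.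
  by apply: DD => //; apply: DN; apply: Dpoly_gmul_l.
move: hx; rewrite /x top_gmul // => /Dp [] //.
by move/Diter_r.
Qed.

End Gen.

Section Poly.
Variable S : comNzRingType.
Variable D : S -> Prop.
Hypothesis D0 : D 0.
Hypothesis DD : forall x y, D x -> D y -> D (x + y).
Hypothesis DM : forall r x, D x -> D (r * x).
Hypothesis Dp : forall x y, D (x * y) -> D x \/ D y.

Lemma gmul_id (P Q : {poly S}) : gmul id (fun _ => 0) P Q = P * Q.
Proof.
have e1 : forall Q' : {poly S}, gdmul id (fun _ => 0) Q' = Q' * 'X.
  move=> Q'; apply/polyP => k; rewrite coef_gdmul // coefMX addr0.
  by case: k.
have e2 : forall i, iter i (gdmul id (fun _ => 0)) Q = Q * 'X^i.
  by elim => [|i IH] /=; rewrite ?expr0 ?mulr1 // e1 IH exprSr mulrA.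
rewrite /gmul.
have -> : P * Q = (\poly_(i < size P) P`_i) * Q by rewrite coefK.
rewrite poly_def mulr_suml; apply: eq_bigr => i _.
by rewrite e2 -mul_polyC mulrA mulrAC.
Qed.

Lemma Dpoly0 : Dpoly D 0.
Proof. by move=> i; rewrite coef0. Qed.

Lemma DpolyD P Q : Dpoly D P -> Dpoly D Q -> Dpoly D (P + Q).
Proof. by move=> hP hQ i; rewrite coefD; apply: DD. Qed.

Lemma DpolyM (P Q : {poly S}) : Dpoly D Q -> Dpoly D (P * Q).
Proof.
move=> hQ i; rewrite coefM; apply: (big_ind D) => // j _; exact: DM.
Qed.

Lemma Dpoly_prime (P Q : {poly S}) : Dpoly D (P * Q) -> Dpoly D P \/ Dpoly D Q.
Proof.
rewrite -gmul_id => h.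
apply: (@gauss_gmul S id (fun _ => 0) erefl erefl _ _ D D0 DD DM Dp _ _ _ P Q h) => //.
by move=> x y; rewrite addr0.
Qed.
End Poly.

Section PIDfacts.
Variable R : idomainType.
Hypothesis HR : PID R.

Lemma dvd_refl (x : R) : dvdR x x.
Proof. by exists 1; rewrite mul1r. Qed.
Lemma dvd_trans (x y z : R) : dvdR x y -> dvdR y z -> dvdR x z.
Proof. by move=> [a ->] [b ->]; exists (b * a); rewrite mulrA. Qed.
Lemma dvd0 (x : R) : dvdR x 0.
Proof. by exists 0; rewrite mul0r. Qed.
Lemma dvdD (x y z : R) : dvdR x y -> dvdR x z -> dvdR x (y + z).
Proof. by move=> [a ->] [b ->]; exists (a + b); rewrite mulrDl. Qed.
Lemma dvdM (x y r : R) : dvdR x y -> dvdR x (r * y).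
Proof. by move=> [a ->]; exists (r * a); rewrite mulrA. Qed.
Lemma dvdMr (x y r : R) : dvdR x y -> dvdR x (y * r).
Proof. by move=> h; rewrite mulrC; apply: dvdM. Qed.

Definition prime_el (p : R) :=
  ~ (p \is a GRing.unit) /\ forall x y, dvdR p (x * y) -> dvdR p x \/ dvdR p y.

Lemma unit_of (d c : R) : c * d = 1 -> d \is a GRing.unit.
Proof. by move=> h; apply/unitrPr; exists c; rewrite mulrC. Qed.

Lemma irred_prime (q : R) : ~ (q \is a GRing.unit) ->
  (forall a b, q = a * b -> a \is a GRing.unit \/ b \is a GRing.unit) -> prime_el q.
Proof.
move=> nq irr; split => // x y hxy.
case: (classic (dvdR q x)) => hx; first by left.
right.
pose J := fun z : R => exists r s, z = r * q + s * x.
have iJ : is_ideal J.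
  split.
  - by exists 0, 0; rewrite !mul0r addr0.
  - move=> u v [r1 [s1 ->]] [r2 [s2 ->]]; exists (r1 + r2), (s1 + s2).
    by rewrite !mulrDl addrACA.
  - move=> r u [r1 [s1 ->]]; exists (r * r1), (r * s1).
    by rewrite mulrDr !mulrA.
case: (HR iJ) => g hg.
have [e he] : dvdR g q by apply/hg; exists 1, 0; rewrite mul1r mul0r addr0.
case: (irr _ _ he) => [eu|gu].
  exfalso; apply: hx.
  have [f hf] : dvdR g x by apply/hg; exists 0, 1; rewrite mul0r mul1r add0r.
  exists (f * e^-1); rewrite hf he mulrA -(mulrA f) mulVr ?mulr1 //.
have [r [s hrs]] : J g by apply/hg; apply: dvd_refl.
case: hxy => c hc.
exists ((r * y + s * c) * g^-1).
have e1 : y * g = (r * y + s * c) * q.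
  rewrite hrs; transitivity (r * y * q + s * (x * y)); first by ring.
  by rewrite hc; ring.
rewrite -[LHS]mulr1 -(mulrV gu) mulrA e1; by rewrite mulrAC.
Qed.


Lemma prime_div (d : R) : d != 0 -> ~ (d \is a GRing.unit) ->
  exists p, prime_el p /\ dvdR p d.
Proof.
move=> d0 du; apply: NNPP => H.
have step : forall x, exists a, (dvdR x d /\ ~ (x \is a GRing.unit)) ->
    [/\ dvdR a x, ~ dvdR x a & ~ (a \is a GRing.unit)].
  move=> x; case: (classic (dvdR x d /\ ~ (x \is a GRing.unit))); last first.
    by move=> h; exists x.
  case=> xd xu.
  have x0 : x != 0.
    by apply/eqP => e; move: xd; rewrite e => -[c hc]; move: d0; rewrite hc mulr0 eqxx.
  have : ~ (forall a b, x = a * b -> a \is a GRing.unit \/ b \is a GRing.unit).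
    by move=> irr; apply: H; exists x; split => //; apply: irred_prime.
  move=> hn0; have [a hn1] := not_all_ex_not _ _ hn0.
  have [b hn2] := not_all_ex_not _ _ hn1.
  have [eab hn] := imply_to_and _ _ hn2.
  have [au bu] := not_or_and _ _ hn.
  exists a => _; split => //.
  - by exists b; rewrite eab mulrC.
  - move=> [e he]; apply: bu.
    have a0 : a != 0 by apply/eqP => e0; move: x0; rewrite eab e0 mul0r eqxx.
    apply: (@unit_of b e); apply: (mulIf a0); rewrite mul1r -mulrA (mulrC b) -eab.
    by rewrite -he.
pose F := fun x => proj1_sig (constructive_indefinite_description _ (step x)).
have FP : forall x, dvdR x d -> ~ (x \is a GRing.unit) ->
   [/\ dvdR (F x) x, ~ dvdR x (F x) & ~ (F x \is a GRing.unit)].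
  by move=> x h1 h2; rewrite /F; case: constructive_indefinite_description => a /=; apply.
pose s := fun n => iter n F d.
have inv : forall n, dvdR (s n) d /\ ~ (s n \is a GRing.unit).
  elim => [|n [IH1 IH2]]; first by split => //; apply: dvd_refl.
  have [h1 _ h3] := FP _ IH1 IH2.
  by split => //; apply: dvd_trans h1 IH1.
have chain : forall n k, dvdR (s (n + k)%N) (s n).
  move=> n; elim => [|k IH]; first by rewrite addn0; apply: dvd_refl.
  rewrite addnS; case: (inv (n + k)%N) => h1 h2.
  by have [h _ _] := FP _ h1 h2; apply: dvd_trans h IH.
pose I := fun z : R => exists n, dvdR (s n) z.
have iI : is_ideal I.
  split.
  - by exists 0%N; apply: dvd0.
  - move=> u v [n hn] [m hm]; exists (n + m)%N; apply: dvdD.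
      by apply: dvd_trans (chain n m) hn.
    by rewrite addnC; apply: dvd_trans (chain m n) hm.
  - by move=> r u [n hn]; exists n; apply: dvdM.
case: (HR iI) => g hg.
have [n hn] : I g by apply/hg; apply: dvd_refl.
have hg1 : dvdR g (s n.+1) by apply/hg; exists n.+1; apply: dvd_refl.
case: (inv n) => h1 h2; have [_ h _] := FP _ h1 h2.
by apply: h; apply: dvd_trans hn hg1.
Qed.
End PIDfacts.

Section Content.
Variable R : idomainType.
Hypothesis HR : PID R.

Lemma dvd_sum (x : R) (n : nat) (F : 'I_n -> R) :
  (forall i, dvdR x (F i)) -> dvdR x (\sum_(i < n) F i).
Proof. by move=> h; apply: (big_ind (dvdR x)) => //; [apply: dvd0 | move=> ? ?; apply: dvdD]. Qed.

Lemma primitive1 : primitive_poly (1 : {poly R}).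
Proof.
move=> d /(_ 0%N); rewrite coef1 eqxx => -[c hc].
by apply: (@unit_of _ d c); rewrite -hc.
Qed.

Lemma content (f : {poly R}) :
  exists ch : R * {poly R}, f = ch.1 *: ch.2 /\ primitive_poly ch.2.
Proof.
case: (eqVneq f 0) => [->|f0].
  by exists (0, 1) => /=; split; [rewrite scale0r | apply: primitive1].
pose I := fun z : R => exists r : nat -> R, z = \sum_(j < size f) r j * f`_j.
have iI : is_ideal I.
  split.
  - by exists (fun _ => 0); rewrite big1 // => j _; rewrite mul0r.
  - move=> u v [r1 ->] [r2 ->]; exists (fun j => r1 j + r2 j).
    by rewrite -big_split; apply: eq_bigr => j _; rewrite mulrDl.
  - move=> r u [r1 ->]; exists (fun j => r * r1 j).
    by rewrite mulr_sumr; apply: eq_bigr => j _; rewrite mulrA.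
case: (HR iI) => g hg.
have hfj : forall j, dvdR g f`_j.
  move=> j; apply/hg; exists (fun k => (k == j)%:R).
  rewrite (eq_bigr (fun k : 'I_(size f) => if (k : nat) == j then f`_k else 0)); last first.
    by move=> k _; case: eqP => _; rewrite ?mul1r ?mul0r.
  rewrite -big_mkcond big_ord1_eq; case: ltnP => // hj.
  by rewrite (leq_sizeP _ _ hj).
pose hj := fun j => proj1_sig (constructive_indefinite_description _ (hfj j)).
have hjP : forall j, f`_j = hj j * g.
  by move=> j; rewrite /hj; case: constructive_indefinite_description.
exists (g, \poly_(j < size f) hj j) => /=; split.
  apply/polyP => j; rewrite coefZ coef_poly; case: ltnP => h.
    by rewrite hjP mulrC.
  by rewrite mulr0 (leq_sizeP _ _ h).
have g0 : g != 0.
  apply/eqP => e; move/eqP: f0; apply; apply/polyP => j.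
  by rewrite hjP e mulr0 coef0.
move=> d hd.
have hdg : forall j : 'I_(size f), dvdR (d * g) f`_j.
  move=> j; have := hd j; rewrite coef_poly ltn_ord => -[e he].
  by exists e; rewrite hjP he mulrA.
have [r hr] : I g by apply/hg; apply: dvd_refl.
have [c hc] : dvdR (d * g) g.
  by rewrite {2}hr; apply: dvd_sum => j; apply: dvdM.
apply: (@unit_of _ d c); apply: (mulIf g0); by rewrite mul1r -mulrA -hc.
Qed.
End Content.

Section Ore.
Variable R : idomainType.
Hypothesis HR : PID R.
Variables (gamma tau : R) (delta : {poly R} -> {poly R}).
Hypothesis Hgamma : gamma \is a GRing.unit.
Hypothesis Hdelta : ore_delta_ok gamma tau delta.

Local Notation sg := (ore_sigma gamma tau).

Lemma sg0 : sg 0 = 0.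
Proof. exact: comp_poly0. Qed.
Lemma sgD x y : sg (x + y) = sg x + sg y.
Proof. exact: comp_polyD. Qed.
Lemma sinv f : sg f \Po (gamma^-1 *: ('X - tau%:P)) = f.
Proof.
rewrite /ore_sigma -comp_polyA.
have -> : (gamma *: 'X + tau%:P) \Po (gamma^-1 *: ('X - tau%:P)) = 'X.
  by rewrite comp_polyD comp_polyZ comp_polyX comp_polyC scalerA mulrV // scale1r subrK.
exact: comp_polyXr.
Qed.

Lemma comp_D (p : R) (f q : {poly R}) : Dpoly (dvdR p) f -> Dpoly (dvdR p) (f \Po q).
Proof.
move=> h k; rewrite comp_polyE coef_sum; apply: dvd_sum => i.
by rewrite coefZ; apply: dvdMr.
Qed.

Lemma dl0 : delta 0 = 0.
Proof.
case: Hdelta => lin _ _.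
have h := lin 1 0 0; rewrite scaler0 addr0 scale1r in h.
by have := congr1 (fun x => x - delta 0) h; rewrite addrK subrr => <-.
Qed.
Lemma dlD x y : delta (x + y) = delta x + delta y.
Proof. by case: Hdelta => lin _ _; rewrite -{1}(scale1r x) lin scale1r. Qed.
Lemma dlZ c x : delta (c *: x) = c *: delta x.
Proof. by case: Hdelta => lin _ _; rewrite -(addr0 (c *: x)) lin dl0 addr0. Qed.
Lemma dl_sum n (F : 'I_n -> {poly R}) : delta (\sum_(i < n) F i) = \sum_(i < n) delta (F i).
Proof.
elim: n F => [|n IH] F; first by rewrite !big_ord0 dl0.
by rewrite !big_ord_recr /= dlD IH.
Qed.

Lemma dl_D (p : R) (f : {poly R}) : Dpoly (dvdR p) f -> Dpoly (dvdR p) (delta f).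
Proof.
move=> h k; rewrite -(coefK f) poly_def dl_sum coef_sum; apply: dvd_sum => i.
by rewrite dlZ coefZ; apply: dvdMr.
Qed.

Lemma Rprim_ne0 (P : {poly {poly R}}) : R_primitive P -> P != 0.
Proof.
move=> [a [f [_ _ hc]]]; apply/eqP => e.
have : (0 : R) \is a GRing.unit.
  by apply: hc => i; exfalso; case: i => i /=; rewrite e size_poly0.
by rewrite unitr0.
Qed.

Lemma Rprim_notD (P : {poly {poly R}}) p : R_primitive P -> prime_el p ->
  ~ Dpoly (Dpoly (dvdR p)) P.
Proof.
move=> [a [f [hPa hf hc]]] hp hD; case: hp => pu pp; apply: (pu); apply: hc => i.
apply: NNPP => na; apply: (pu); apply: (hf i) => j.
have := hD i j; rewrite hPa coefZ => /pp [] //.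
Qed.
End Ore.

Unset Implicit Arguments. Set Strict Implicit.

Theorem mainTheorem15 (R : idomainType) (HR : PID R)
    (gamma tau : R) (delta : {poly R} -> {poly R})
    (Hgamma : gamma \is a GRing.unit)
    (Hdelta : ore_delta_ok gamma tau delta)
    (P Q : {poly {poly R}}) :
  R_primitive P -> R_primitive Q -> R_primitive (ore_mul gamma tau delta P Q).
Proof.
move=> hP hQ.
set L := ore_mul gamma tau delta P Q.
pose cc := fun i => proj1_sig (constructive_indefinite_description _ (content HR L`_i)).
have ccP : forall i, L`_i = (cc i).1 *: (cc i).2 /\ primitive_poly (cc i).2.
  by move=> i; rewrite /cc; case: constructive_indefinite_description.
exists (fun i => (cc i).1), (fun i => (cc i).2); split.
- by move=> i; case: (ccP i).
- by move=> i; case: (ccP i).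
move=> d hd; apply: NNPP => du.
have hL : forall i j, dvdR d (L`_i)`_j.
  move=> i j; case: (ltnP i (size L)) => hi.
    by have := hd (Ordinal hi) => /= hdi; case: (ccP i) => -> _; rewrite coefZ; apply: dvdMr.
  by rewrite (leq_sizeP _ _ hi) //; rewrite coef0; apply: dvd0.
have sgDr0 : forall x : {poly R}, ore_sigma gamma tau x = 0 -> x = 0.
  by move=> x h; rewrite -(sinv tau Hgamma x) h comp_poly0.
case: (eqVneq d 0) => [d0|d0].
  have hz : Dpoly (fun x : {poly R} => x = 0) L.
    move=> i; apply/polyP => j; rewrite coef0.
    by have := hL i j; rewrite d0 => -[c ->]; rewrite mulr0.
  pose Z := fun x : {poly R} => x = 0.
  have h1 : forall x y, Z x -> Z y -> Z (x + y) by move=> x y -> ->; rewrite addr0.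
  have h2 : forall r x, Z x -> Z (r * x) by move=> r x ->; rewrite mulr0.
  have h3 : forall x y, Z (x * y) -> Z x \/ Z y.
    by move=> x y /eqP; rewrite mulf_eq0 => /orP [] /eqP; [left | right].
  have h4 : forall x, Z x -> Z (ore_sigma gamma tau x) by move=> x ->; apply: sg0.
  have h6 : forall x, Z x -> Z (delta x) by move=> x ->; apply: (dl0 Hdelta).
  have [hP0|hQ0] := @gauss_gmul _ (ore_sigma gamma tau) delta (sg0 gamma tau) (dl0 Hdelta)
     (sgD gamma tau) (dlD Hdelta) Z erefl h1 h2 h3 h4 sgDr0 h6 P Q hz.
  - move: (Rprim_ne0 hP) => /eqP; apply; apply/polyP => i.
    by rewrite hP0 coef0.
  - move: (Rprim_ne0 hQ) => /eqP; apply; apply/polyP => i.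
    by rewrite hQ0 coef0.
have [p [hp hpd]] := prime_div HR d0 du.
have hpp := hp; case: hpp => pu pp.
have hD : Dpoly (Dpoly (dvdR p)) L.
  by move=> i j; apply: dvd_trans hpd (hL i j).
have pD : forall x y : R, dvdR p x -> dvdR p y -> dvdR p (x + y) by move=> x y; apply: dvdD.
have pM : forall r x : R, dvdR p x -> dvdR p (r * x) by move=> r x; apply: dvdM.
pose Dp := Dpoly (dvdR p).
have h1 : forall x y, Dp x -> Dp y -> Dp (x + y).
  by move=> x y; apply: (DpolyD pD).
have h2 : forall r x, Dp x -> Dp (r * x).
  by move=> r x; apply: (DpolyM (dvd0 p) pD pM).
have h3 : forall x y, Dp (x * y) -> Dp x \/ Dp y.
  by move=> x y; apply: Dpoly_prime => //; apply: dvd0.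
have h4 : forall x, Dp x -> Dp (ore_sigma gamma tau x) by move=> x; apply: comp_D.
have h5 : forall x, Dp (ore_sigma gamma tau x) -> Dp x.
  by move=> x h; rewrite -(sinv tau Hgamma x); apply: comp_D.
have h6 : forall x, Dp x -> Dp (delta x) by move=> x; apply: (dl_D Hdelta).
have [hP0|hQ0] := @gauss_gmul _ (ore_sigma gamma tau) delta (sg0 gamma tau) (dl0 Hdelta)
     (sgD gamma tau) (dlD Hdelta) Dp (Dpoly0 (dvd0 p)) h1 h2 h3 h4 h5 h6 P Q hD.
- exact: (Rprim_notD hP hp).
- exact: (Rprim_notD hQ hp).
Qed.
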